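(* Let $a\in(0,1)$ and $\theta>0$ be as in the context and write $\Gamma=\Gamma(\zeta+1)$. Then for all $t>0$: for $\zeta>0$: $\dfrac{\Gamma}{a^{-\zeta}-1}\le h^{(1,\zeta)}_t\le\dfrac{a^{-\zeta}\Gamma}{a^{-\zeta}-1}$; for $-1<\zeta<0$: $\dfrac{a^{-\zeta}\Gamma}{1-a^{-\zeta}}\le h^{(2,\zeta)}_t\le\dfrac{\Gamma}{1-a^{-\zeta}}$; $\dfrac{a^{-\zeta}(2-2^{-\zeta})\Gamma}{1-a^{-\zeta}}\le h^{(3,\zeta)}_t\le\dfrac{(2-2^{-\zeta})\Gamma}{1-a^{-\zeta}}$; $\dfrac{a^{-\zeta}\Gamma}{(1-a^{-\zeta})(1-\zeta)}\le\tilde h^{(2,\zeta)}_t\le\dfrac{\Gamma}{(1-a^{-\zeta})(1-\zeta)}$; $\dfrac{a^{-\zeta}(2-2^{-\zeta})\Gamma}{(1-a^{-\zeta})(1-\zeta)}\le\tilde h^{(3,\zeta)}_t\le\dfrac{(2-2^{-\zeta})\Gamma}{(1-a^{-\zeta})(1-\zeta)}$.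
   Context: Let $N\ge2$, $0<c<N$, $\sigma>0$, $a=c/N$, $\theta=\sigma(N^2/c-1)/(N-1)$. For $t>0$: for $\zeta>0$, $h^{(1,\zeta)}_t=\sum_{j\in\mathbb Z}(\theta a^jt)^\zeta e^{-\theta a^jt}$; for $-1<\zeta<0$, $h^{(2,\zeta)}_t=\sum_{j\in\mathbb Z}(\theta a^jt)^\zeta(1-e^{-\theta a^jt})$, $h^{(3,\zeta)}_t=\sum_{j\in\mathbb Z}(\theta a^jt)^\zeta(1-e^{-\theta a^jt})^2$, $\tilde h^{(2,\zeta)}_t=\sum_{j\in\mathbb Z}(\theta a^jt)^{\zeta-1}(e^{-\theta a^jt}-1+\theta a^jt)$, $\tilde h^{(3,\zeta)}_t=\sum_{j\in\mathbb Z}(\theta a^jt)^{\zeta-1}(2e^{-\theta a^jt}-\frac12e^{-2\theta a^jt}+\theta a^jt-\frac32)$. *)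

(* Defs.v *)
From Stdlib Require Import Reals ZArith.
From Coquelicot Require Import Coquelicot.
Open Scope R_scope.

Definition Gamma (s : R) : R :=
  RInt_gen (fun x => Rpower x (s - 1) * exp (- x)) (at_right 0) (Rbar_locally p_infty).

Definition zpos (f : Z -> R) (n : nat) : R := f (Z.of_nat n).
Definition zneg (f : Z -> R) (n : nat) : R := f (- Z.of_nat n - 1)%Z.
Definition zsummable (f : Z -> R) : Prop := ex_series (zpos f) /\ ex_series (zneg f).
Definition zsum (f : Z -> R) : R := Series (zpos f) + Series (zneg f).

Definition a_par (N : nat) (c : R) : R := c / INR N.
Definition theta_par (N : nat) (c sigma : R) : R :=
  sigma * (INR N ^ 2 / c - 1) / (INR N - 1).

Definition u (a theta t : R) (j : Z) : R := theta * powerRZ a j * t.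

Definition h1_term a theta zeta t j :=
  Rpower (u a theta t j) zeta * exp (- u a theta t j).
Definition h2_term a theta zeta t j :=
  Rpower (u a theta t j) zeta * (1 - exp (- u a theta t j)).
Definition h3_term a theta zeta t j :=
  Rpower (u a theta t j) zeta * (1 - exp (- u a theta t j)) ^ 2.
Definition h2t_term a theta zeta t j :=
  Rpower (u a theta t j) (zeta - 1) * (exp (- u a theta t j) - 1 + u a theta t j).
Definition h3t_term a theta zeta t j :=
  Rpower (u a theta t j) (zeta - 1) *
  (2 * exp (- u a theta t j) - / 2 * exp (- (2 * u a theta t j)) + u a theta t j - 3 / 2).

(* Main.v *)
Require Import Defs.
From Stdlib Require Import Reals ZArith Lra Lia.
From Coquelicot Require Import Coquelicot.
Open Scope R_scope.


Fixpoint ZS (f : Z -> R) (n : nat) : R :=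
  match n with
  | O => zpos f 0 + zneg f 0
  | Datatypes.S m => ZS f m + zpos f (Datatypes.S m) + zneg f (Datatypes.S m)
  end.

Lemma ZS_eq f n : ZS f n = sum_n (zpos f) n + sum_n (zneg f) n.
Proof.
  induction n as [|n IH]; simpl.
  - rewrite !sum_O. reflexivity.
  - rewrite IH, !sum_Sn. unfold plus; simpl. ring.
Qed.

Lemma series_lim (a : nat -> R) : ex_series a -> is_lim_seq (sum_n a) (Series a).
Proof.
  intros H. apply Series_correct in H. exact H.
Qed.

Lemma ZS_lim f : zsummable f -> is_lim_seq (ZS f) (zsum f).
Proof.
  intros [H1 H2]. unfold zsum.
  eapply is_lim_seq_ext. intros n; symmetry; apply ZS_eq.
  apply (is_lim_seq_plus' _ _ (Series (zpos f)) (Series (zneg f)));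
  apply series_lim; assumption.
Qed.

Lemma ZS_ext f g n : (forall j, f j = g j) -> ZS f n = ZS g n.
Proof. intros H. induction n; simpl; unfold zpos, zneg; rewrite ?IHn, !H; reflexivity. Qed.

Lemma ZS_lin f g al be n : ZS (fun j => al * f j + be * g j) n = al * ZS f n + be * ZS g n.
Proof. induction n; simpl; unfold zpos, zneg in *; rewrite ?IHn; ring. Qed.

Lemma ZS_mono f g n : (forall j, f j <= g j) -> ZS f n <= ZS g n.
Proof. intros H. induction n; simpl; unfold zpos, zneg; pose proof (H 0%Z);
  repeat match goal with |- context [f ?j] => pose proof (H j); fail end; 
  try (pose proof (H (Z.of_nat (Datatypes.S n))); pose proof (H (- Z.of_nat (Datatypes.S n) - 1)%Z));
  try pose proof (H (- Z.of_nat 0 - 1)%Z); simpl in *; lra. Qed.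

Lemma ZS_incr f n : (forall j, 0 <= f j) -> ZS f n <= ZS f (Datatypes.S n).
Proof. intros H. simpl. unfold zpos, zneg. pose proof (H (Z.of_nat (Datatypes.S n))); pose proof (H (- Z.of_nat (Datatypes.S n) - 1)%Z); lra. Qed.

Lemma ZS_le_zsum f n : (forall j, 0 <= f j) -> zsummable f -> ZS f n <= zsum f.
Proof.
  intros H Hs. apply is_lim_seq_incr_compare. now apply ZS_lim. intros m; now apply ZS_incr.
Qed.

Lemma zsummable_lin f g al be : zsummable f -> zsummable g ->
  zsummable (fun j => al * f j + be * g j).
Proof.
  intros [F1 F2] [G1 G2]; split.
  - apply (ex_series_ext (fun n => plus (scal al (zpos f n)) (scal be (zpos g n)))).
    intros n; reflexivity.
    apply (@ex_series_plus R_AbsRing R_NormedModule); apply (@ex_series_scal_l R_AbsRing R_NormedModule); assumption.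
  - apply (ex_series_ext (fun n => plus (scal al (zneg f n)) (scal be (zneg g n)))).
    intros n; reflexivity.
    apply (@ex_series_plus R_AbsRing R_NormedModule); apply (@ex_series_scal_l R_AbsRing R_NormedModule); assumption.
Qed.

Lemma zsum_lin f g al be : zsummable f -> zsummable g ->
  zsum (fun j => al * f j + be * g j) = al * zsum f + be * zsum g.
Proof.
  intros Hf Hg.
  assert (H := ZS_lim _ (zsummable_lin f g al be Hf Hg)).
  assert (H2 : is_lim_seq (fun n => al * ZS f n + be * ZS g n) (al * zsum f + be * zsum g)).
  { pose proof (is_lim_seq_scal_l _ al _ (ZS_lim f Hf)) as A; simpl in A.
    pose proof (is_lim_seq_scal_l _ be _ (ZS_lim g Hg)) as B; simpl in B.
    apply (is_lim_seq_plus' _ _ (al * zsum f) (be * zsum g)); assumption. }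
  assert (H3 : is_lim_seq (ZS (fun j => al * f j + be * g j)) (al * zsum f + be * zsum g)).
  { eapply is_lim_seq_ext; [|exact H2]. intros n; symmetry; apply ZS_lin. }
  apply is_lim_seq_unique in H. apply is_lim_seq_unique in H3. rewrite H in H3.
  injection H3; auto.
Qed.

Lemma zsummable_le f g : (forall j, 0 <= f j <= g j) -> zsummable g -> zsummable f.
Proof.
  intros H [G1 G2]; split.
  - apply (@ex_series_le R_AbsRing R_CompleteNormedModule _ (zpos g)); auto. intros n.
    change (norm (zpos f n)) with (Rabs (zpos f n)). unfold zpos. destruct (H (Z.of_nat n)).
    rewrite Rabs_pos_eq; lra.
  - apply (@ex_series_le R_AbsRing R_CompleteNormedModule _ (zneg g)); auto. intros n.
    change (norm (zneg f n)) with (Rabs (zneg f n)). unfold zneg. destruct (H (- Z.of_nat n - 1)%Z).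
    rewrite Rabs_pos_eq; lra.
Qed.


Lemma ZS_tel (D T : Z -> R) al be n :
  (forall j, D j = al * T j - be * T (j + 1)%Z) ->
  ZS D n = (al - be) * ZS T n + be * (T (- Z.of_nat n - 1)%Z - T (Z.of_nat (Datatypes.S n))).
Proof.
  intros H. induction n as [|n IH].
  - simpl. unfold zpos, zneg. rewrite !H. simpl. ring.
  - simpl ZS. rewrite IH. unfold zpos, zneg. rewrite !H.
    replace (Z.of_nat (Datatypes.S n) + 1)%Z with (Z.of_nat (Datatypes.S (Datatypes.S n))) by lia.
    replace (- Z.of_nat (Datatypes.S n) - 1 + 1)%Z with (- Z.of_nat n - 1)%Z by lia.
    ring.
Qed.

Lemma zsum_terms_0 T : zsummable T ->
  is_lim_seq (fun n => T (- Z.of_nat n - 1)%Z - T (Z.of_nat (Datatypes.S n))) 0.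
Proof.
  intros [H1 H2].
  apply ex_series_lim_0 in H1. apply ex_series_lim_0 in H2.
  apply is_lim_seq_incr_1 in H1.
  replace (Finite 0) with (Rbar_minus 0 0) by (simpl; f_equal; ring).
  apply (is_lim_seq_minus _ _ 0 0); [exact H2| exact H1|]. simpl. auto.
  unfold is_Rbar_minus, is_Rbar_plus; simpl. f_equal.
Qed.

Lemma ZS_tel_lim (D T : Z -> R) al be :
  (forall j, D j = al * T j - be * T (j + 1)%Z) -> zsummable T ->
  is_lim_seq (ZS D) ((al - be) * zsum T).
Proof.
  intros H Hs.
  eapply is_lim_seq_ext. intros n; symmetry; apply (ZS_tel D T al be n H).
  replace ((al - be) * zsum T) with ((al - be) * zsum T + be * 0) by ring.
  apply (is_lim_seq_plus' _ _ ((al - be) * zsum T) (be * 0)).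
  - pose proof (is_lim_seq_scal_l _ (al - be) _ (ZS_lim T Hs)) as A; simpl in A; exact A.
  - pose proof (is_lim_seq_scal_l _ be _ (zsum_terms_0 T Hs)) as A; simpl in A; exact A.
Qed.

Section Grid.
Variables (a x : R).
Hypothesis (Ha0 : 0 < a) (Ha1 : a < 1) (Hx : 0 < x).
Definition yy (j : Z) := x * powerRZ a j.

Lemma yy_pos j : 0 < yy j.
Proof. unfold yy. apply Rmult_lt_0_compat; auto. apply powerRZ_lt; auto. Qed.

Lemma yy_step j : yy (j + 1)%Z = a * yy j.
Proof. unfold yy. rewrite powerRZ_add by lra. simpl. ring. Qed.

Lemma yy_W j z : Rpower (yy j) z = Rpower x z * powerRZ (Rpower a z) j.
Proof.
  unfold yy. rewrite <- Rpower_mult_distr; auto. 2: apply powerRZ_lt; auto.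
  f_equal. rewrite powerRZ_Rpower by auto. rewrite powerRZ_Rpower by (apply exp_pos).
  rewrite !Rpower_mult. f_equal; ring.
Qed.

Lemma yy_small eps : 0 < eps -> exists N, forall n, (N <= n)%nat -> yy (Z.of_nat (Datatypes.S n)) <= eps.
Proof.
  intros He.
  assert (G := is_lim_seq_geom a). rewrite Rabs_pos_eq in G by lra. specialize (G Ha1).
  apply is_lim_seq_spec in G. destruct (G (mkposreal (eps / x) ltac:(apply Rdiv_lt_0_compat; auto))) as [N HN].
  exists N. intros n Hn. specialize (HN (Datatypes.S n) ltac:(lia)). simpl in HN.
  unfold yy. rewrite <- pow_powerRZ. try rewrite Rminus_0_r in HN.
  rewrite Rabs_pos_eq in HN by (apply Rlt_le; change (0 < a ^ (Datatypes.S n)); apply pow_lt; lra).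
  apply Rlt_le. replace eps with (x * (eps / x)) by (field; lra).
  apply Rmult_lt_compat_l; auto.
Qed.

Lemma yy_large M : exists N, forall n, (N <= n)%nat -> M <= yy (- Z.of_nat n - 1)%Z.
Proof.
  destruct (Rle_lt_dec M 0) as [HM|HM].
  { exists O. intros n _. pose proof (yy_pos (- Z.of_nat n - 1)%Z). lra. }
  assert (G := is_lim_seq_geom a). rewrite Rabs_pos_eq in G by lra. specialize (G Ha1).
  apply is_lim_seq_spec in G. destruct (G (mkposreal (x / M) ltac:(apply Rdiv_lt_0_compat; auto))) as [N HN].
  exists N. intros n Hn. specialize (HN (Datatypes.S n) ltac:(lia)). simpl in HN.
  try rewrite Rminus_0_r in HN.
  rewrite Rabs_pos_eq in HN by (apply Rlt_le; change (0 < a ^ (Datatypes.S n)); apply pow_lt; lra).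
  unfold yy. replace (- Z.of_nat n - 1)%Z with (- Z.of_nat (Datatypes.S n))%Z by lia.
  rewrite powerRZ_neg', <- pow_powerRZ.
  assert (0 < a ^ (Datatypes.S n)) by (apply pow_lt; lra).
  simpl pow in *. 
  apply Rle_trans with (x * / (x / M)).
  - right. field. lra.
  - apply Rmult_le_compat_l; [lra|]. apply Rlt_le, Rinv_lt_contravar; auto.
    apply Rmult_lt_0_compat; auto. apply Rdiv_lt_0_compat; auto.
Qed.

Lemma ZS_chasles (f : R -> R) n :
  (forall s, 0 < s -> continuous f s) ->
  ZS (fun j => RInt f (yy (j + 1)%Z) (yy j)) n = RInt f (yy (Z.of_nat (Datatypes.S n))) (yy (- Z.of_nat n - 1)%Z).
Proof.
  intros Hc.
  assert (EX : forall u v, 0 < u -> 0 < v -> ex_RInt f u v).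
  { intros u v Hu Hv. apply (@ex_RInt_continuous R_CompleteNormedModule). intros z Hz. apply Hc.
    assert (0 < Rmin u v) by (apply Rmin_glb_lt; auto). lra. }
  induction n as [|n IH].
  - simpl. unfold zpos, zneg. simpl.
    rewrite <- (@RInt_Chasles R_CompleteNormedModule f (yy 1) (yy 0) (yy (-1))) by (apply EX; apply yy_pos).
    reflexivity.
  - simpl ZS. rewrite IH. unfold zpos, zneg.
    replace (Z.of_nat (Datatypes.S n) + 1)%Z with (Z.of_nat (Datatypes.S (Datatypes.S n))) by lia.
    replace (- Z.of_nat (Datatypes.S n) - 1 + 1)%Z with (- Z.of_nat n - 1)%Z by lia.
    set (A := yy (Z.of_nat (Datatypes.S (Datatypes.S n)))).
    set (B := yy (Z.of_nat (Datatypes.S n))).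
    set (C := yy (- Z.of_nat n - 1)%Z).
    set (D := yy (- Z.of_nat (Datatypes.S n) - 1)%Z).
    assert (E1 := @RInt_Chasles R_CompleteNormedModule f A B C ltac:(apply EX; apply yy_pos) ltac:(apply EX; apply yy_pos)).
    assert (E2 := @RInt_Chasles R_CompleteNormedModule f A C D ltac:(apply EX; apply yy_pos) ltac:(apply EX; apply yy_pos)).
    simpl in E1, E2. unfold plus in E1, E2; simpl in E1, E2. lra.
Qed.
End Grid.


Definition IntLim (f : R -> R) (L : R) :=
  forall eps, 0 < eps -> exists a0 b0, 0 < a0 /\ a0 < b0 /\
    forall a b, 0 < a -> a <= a0 -> b0 <= b -> Rabs (RInt f a b - L) < eps.

Lemma exRI (f : R -> R) u v : (forall s, 0 < s -> continuous f s) -> 0 < u -> 0 < v -> ex_RInt f u v.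
Proof.
  intros Hc Hu Hv. apply (@ex_RInt_continuous R_CompleteNormedModule). intros z Hz. apply Hc.
  assert (0 < Rmin u v) by (apply Rmin_glb_lt; auto). lra.
Qed.

Lemma RInt_scal_R (f : R -> R) u v k : ex_RInt f u v -> RInt (fun s => k * f s) u v = k * RInt f u v.
Proof. intros H. apply (@RInt_scal R_CompleteNormedModule f u v k H). Qed.

Lemma cont_mult_R (f g : R -> R) x : continuous f x -> continuous g x -> continuous (fun s => f s * g s) x.
Proof. intros Hf Hg. apply (@continuous_mult R_UniformSpace R_AbsRing f g x Hf Hg). Qed.

Lemma cont_Rpower z s : 0 < s -> continuous (fun s => Rpower s z) s.
Proof. intros Hs0. apply (@ex_derive_continuous R_AbsRing R_NormedModule). exists (z * Rpower s (z - 1)). apply is_derive_Reals.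
    apply derivable_pt_lim_power; auto. Qed.

Lemma ZS_int_lim (a x : R) (f : R -> R) J :
  0 < a -> a < 1 -> 0 < x -> (forall s, 0 < s -> continuous f s) -> IntLim f J ->
  is_lim_seq (ZS (fun j => RInt f (yy a x (j + 1)%Z) (yy a x j))) J.
Proof.
  intros Ha0 Ha1 Hx Hc HL.
  eapply is_lim_seq_ext. intros n; symmetry; apply (ZS_chasles a x Ha0 Hx f n Hc).
  apply is_lim_seq_spec. intros eps.
  destruct (HL eps (cond_pos eps)) as (a0 & b0 & Ha & Hab & H).
  destruct (yy_small a x Ha0 Ha1 Hx a0 Ha) as [N1 HN1].
  destruct (yy_large a x Ha0 Ha1 Hx b0) as [N2 HN2].
  exists (max N1 N2). intros n Hn. apply H.
  - apply yy_pos; auto.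
  - apply HN1; lia.
  - apply HN2; lia.
Qed.

Lemma abstract_bound (a x z J : R) (G g : R -> R) :
  0 < a -> a < 1 -> 0 < x ->
  (forall s, 0 < s -> is_derive G s (g s)) ->
  (forall s, 0 < s -> continuous g s) ->
  (forall y s, 0 < y -> a * y < s < y ->
     Rpower y z * g s <= Rpower s z * g s <= Rpower (a * y) z * g s) ->
  zsummable (fun j => Rpower (yy a x j) z * G (yy a x j)) ->
  IntLim (fun s => Rpower s z * g s) J ->
  (1 - / Rpower a z) * zsum (fun j => Rpower (yy a x j) z * G (yy a x j)) <= J /\
  J <= (Rpower a z - 1) * zsum (fun j => Rpower (yy a x j) z * G (yy a x j)).
Proof.
  intros Ha0 Ha1 Hx HG Hg Hp Hs HL.
  set (T := fun j => Rpower (yy a x j) z * G (yy a x j)).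
  set (q := Rpower a z).
  assert (Hq : 0 < q) by apply exp_pos.
  assert (HW : forall j, Rpower (yy a x (j + 1)) z = q * Rpower (yy a x j) z).
  { intros j. rewrite yy_step by auto. unfold q. rewrite Rpower_mult_distr; auto. apply yy_pos; auto. }
  assert (Hfc : forall s, 0 < s -> continuous (fun s => Rpower s z * g s) s).
  { intros s Hs0. apply cont_mult_R. now apply cont_Rpower. now apply Hg. }
  assert (HdG : forall j, G (yy a x j) - G (yy a x (j + 1))
           = RInt g (yy a x (j + 1)) (yy a x j)).
  { intros j. symmetry. apply is_RInt_unique.
    apply (@is_RInt_derive R_CompleteNormedModule G g).
    - intros s Hs0. apply HG. assert (0 < Rmin (yy a x (j + 1)) (yy a x j)) by (apply Rmin_glb_lt; apply yy_pos; auto). lra.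
    - intros s Hs0. apply Hg. assert (0 < Rmin (yy a x (j + 1)) (yy a x j)) by (apply Rmin_glb_lt; apply yy_pos; auto). lra. }
  set (I := fun j => RInt (fun s => Rpower s z * g s) (yy a x (j + 1)) (yy a x j)).
  set (A := fun j => T j - / q * T (j + 1)%Z).
  set (B := fun j => q * T j - 1 * T (j + 1)%Z).
  assert (HAI : forall j, A j <= I j /\ I j <= B j).
  { intros j. 
    assert (Hy := yy_pos a x Ha0 Hx j). assert (Hy1 := yy_pos a x Ha0 Hx (j + 1)).
    assert (Hst := yy_step a x Ha0 j).
    assert (Hlt : yy a x (j + 1) <= yy a x j) by (rewrite Hst; nra).
    assert (EA : A j = RInt (fun s => Rpower (yy a x j) z * g s) (yy a x (j + 1)) (yy a x j)).
    { rewrite RInt_scal_R by (apply exRI; auto). rewrite <- HdG. unfold A, T. rewrite HW.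
      field_simplify; [|lra]. reflexivity. }
    assert (EB : B j = RInt (fun s => Rpower (yy a x (j + 1)) z * g s) (yy a x (j + 1)) (yy a x j)).
    { rewrite RInt_scal_R by (apply exRI; auto). rewrite <- HdG. unfold B, T. rewrite HW. ring. }
    rewrite EA, EB. unfold I. split; apply RInt_le; auto; try (apply exRI; auto);
      try (intros s Hs0; apply cont_mult_R; [apply continuous_const| apply Hg; lra]).
    - intros s Hs0. rewrite Hst in Hs0. apply (Hp (yy a x j) s Hy Hs0).
    - intros s Hs0. rewrite Hst in Hs0 |- *. apply (Hp (yy a x j) s Hy Hs0). }
  assert (LA := ZS_tel_lim A T 1 (/ q) ltac:(intros j; unfold A; ring) Hs).
  assert (LB := ZS_tel_lim B T q 1 ltac:(intros j; unfold B; ring) Hs).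
  assert (LI := ZS_int_lim a x _ J Ha0 Ha1 Hx Hfc HL).
  split.
  - assert (H := is_lim_seq_le _ _ _ _ (fun n => ZS_mono A I n (fun j => proj1 (HAI j))) LA LI).
    simpl in H. exact H.
  - assert (H := is_lim_seq_le _ _ _ _ (fun n => ZS_mono I B n (fun j => proj2 (HAI j))) LI LB).
    simpl in H. exact H.
Qed.


Lemma RInt_extend (f : R -> R) u v u' v' :
  (forall s, 0 < s -> continuous f s) -> (forall s, 0 < s -> 0 <= f s) ->
  0 < u' -> u' <= u -> u <= v -> v <= v' -> RInt f u v <= RInt f u' v'.
Proof.
  intros Hc Hp H1 H2 H3 H4.
  assert (E1 := @RInt_Chasles R_CompleteNormedModule f u' u v ltac:(apply exRI; auto; lra) ltac:(apply exRI; auto; lra)).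
  assert (E2 := @RInt_Chasles R_CompleteNormedModule f u' v v' ltac:(apply exRI; auto; lra) ltac:(apply exRI; auto; lra)).
  simpl in E1, E2; unfold plus in E1, E2; simpl in E1, E2.
  assert (0 <= RInt f u' u) by (apply RInt_ge_0; auto; [apply exRI; auto; lra| intros; apply Hp; lra]).
  assert (0 <= RInt f v v') by (apply RInt_ge_0; auto; [apply exRI; auto; lra| intros; apply Hp; lra]).
  lra.
Qed.

Lemma intlim_exists (f : R -> R) M :
  (forall s, 0 < s -> continuous f s) -> (forall s, 0 < s -> 0 <= f s) ->
  (forall u v, 0 < u -> u < v -> RInt f u v <= M) ->
  exists L, IntLim f L /\ is_RInt_gen f (at_right 0) (Rbar_locally p_infty) L.
Proof.
  intros Hc Hp HM.
  set (E := fun r => exists u v, 0 < u /\ u < v /\ r = RInt f u v).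
  assert (Hb : bound E). { exists M. intros r (u & v & Hu & Huv & ->). apply HM; auto. }
  assert (Hne : exists r, E r). { exists (RInt f 1 2). exists 1, 2. repeat split; lra. }
  destruct (completeness E Hb Hne) as [L [HL1 HL2]].
  assert (KEY : forall eps, 0 < eps -> exists a0 b0, 0 < a0 /\ a0 < b0 /\
    forall a b, 0 < a -> a <= a0 -> b0 <= b -> Rabs (RInt f a b - L) < eps).
  { intros eps He.
    assert (exists r, E r /\ L - eps < r).
    { apply Classical_Pred_Type.not_all_not_ex. intros Hn.
      assert (L <= L - eps); [|lra]. apply HL2. intros r Hr.
      specialize (Hn r). apply Rnot_lt_le. intros Hlt. apply Hn. split; auto. }
    destruct H as (r & (u & v & Hu & Huv & ->) & Hr).
    exists u, v. repeat split; auto. intros a b Ha Hau Hvb.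
    assert (RInt f u v <= RInt f a b) by (apply RInt_extend; auto; lra).
    assert (RInt f a b <= L). { apply HL1. exists a, b. split; [auto|split; [lra|reflexivity]]. }
    apply Rabs_def1; lra. }
  exists L. split; [exact KEY|].
  unfold is_RInt_gen.
  apply (filterlimi_lim_ext_loc (fun ab => RInt f (fst ab) (snd ab))).
  - apply (Filter_prod _ _ _ (fun a => 0 < a) (fun b => 0 < b)).
    + exists (mkposreal 1 ltac:(lra)). intros y _ Hy. exact Hy.
    + exists 0. intros y Hy. exact Hy.
    + intros a b Ha Hb'. simpl. apply (@RInt_correct R_CompleteNormedModule). apply exRI; auto.
  - apply filterlim_locally. intros eps.
    destruct (KEY eps (cond_pos eps)) as (a0 & b0 & Ha0 & Hab & H).
    apply (Filter_prod _ _ _ (fun a => 0 < a /\ a <= a0) (fun b => b0 <= b)).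
    + exists (mkposreal a0 Ha0). intros y Hy Hy0. split; auto.
      unfold ball in Hy; simpl in Hy; unfold AbsRing_ball, abs, minus, plus, opp in Hy; simpl in Hy.
      rewrite Rabs_pos_eq in Hy; lra.
    + exists b0. intros y Hy; lra.
    + intros a b [Ha Ha'] Hb'. simpl. unfold ball; simpl; unfold AbsRing_ball, abs, minus, plus, opp; simpl.
      apply H; auto.
Qed.

Lemma Gamma_eq z L : is_RInt_gen (fun s => Rpower s z * exp (- s)) (at_right 0) (Rbar_locally p_infty) L ->
  Gamma (z + 1) = L.
Proof.
  intros H. unfold Gamma. replace (z + 1 - 1) with z by ring.
  apply (@is_RInt_gen_unique R_CompleteNormedModule); auto.
  apply Proper_StrongProper, at_right_proper_filter.
  apply Proper_StrongProper, Rbar_locally_filter.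
Qed.


Ltac contR := apply (@ex_derive_continuous R_AbsRing R_NormedModule); auto_derive; auto.

Lemma exp_le x y : x <= y -> exp x <= exp y.
Proof. intros [H|H]. apply Rlt_le, exp_increasing; auto. subst; lra. Qed.

Lemma ln_le_minus1 w : 0 < w -> ln w <= w - 1.
Proof. intros Hw. pose proof (exp_ineq1_le (ln w)). rewrite exp_ln in H; lra. Qed.

Lemma pow_exp_bound Z s : 0 < Z -> 0 < s -> Rpower s Z <= exp (Z * (ln (2 * Z) - 1)) * exp (s / 2).
Proof.
  intros HZ Hs. unfold Rpower. rewrite <- exp_plus. apply exp_le.
  assert (H := ln_le_minus1 (s / (2 * Z)) ltac:(apply Rdiv_lt_0_compat; lra)).
  rewrite ln_div in H by lra.
  assert (Z * ln s <= Z * (ln (2 * Z) + (s / (2 * Z) - 1))) by (apply Rmult_le_compat_l; lra).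
  replace (Z * (ln (2 * Z) + (s / (2 * Z) - 1))) with (Z * (ln (2 * Z) - 1) + s / 2) in H0 by (field; lra).
  lra.
Qed.

Lemma Rpower_exp_mono s z1 z2 : 1 <= s -> z1 <= z2 -> Rpower s z1 <= Rpower s z2.
Proof.
  intros Hs Hz. unfold Rpower. apply exp_le. assert (0 <= ln s).
  { rewrite <- ln_1. apply ln_le; lra. }
  apply Rmult_le_compat_r; auto.
Qed.

Lemma Rpower_1_base y : Rpower 1 y = 1.
Proof. unfold Rpower. rewrite ln_1, Rmult_0_r, exp_0. reflexivity. Qed.

Lemma Rpower_pos s y : 0 < Rpower s y.
Proof. apply exp_pos. Qed.

Lemma is_derive_Rpower_div z s : 0 < s -> z + 1 <> 0 ->
  is_derive (fun s => / (z + 1) * Rpower s (z + 1)) s (Rpower s z).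
Proof.
  intros Hs Hz.
  assert (H := derivable_pt_lim_power s (z + 1) Hs). apply is_derive_Reals in H.
  apply (is_derive_scal _ _ (/ (z + 1))) in H.
  replace (Rpower s z) with (scal (/ (z + 1)) ((z + 1) * Rpower s (z + 1 - 1))).
  exact H. unfold scal; simpl; unfold mult; simpl. replace (z + 1 - 1) with z by ring. field; auto.
Qed.

Lemma RInt_Rpower u v z : 0 < u -> 0 < v -> z + 1 <> 0 ->
  RInt (fun s => Rpower s z) u v = / (z + 1) * Rpower v (z + 1) - / (z + 1) * Rpower u (z + 1).
Proof.
  intros Hu Hv Hz. apply is_RInt_unique.
  apply (@is_RInt_derive R_CompleteNormedModule (fun s => / (z + 1) * Rpower s (z + 1))).
  - intros s Hs0. apply is_derive_Rpower_div; auto. assert (0 < Rmin u v) by (apply Rmin_glb_lt; auto). lra.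
  - intros s Hs0. apply cont_Rpower. assert (0 < Rmin u v) by (apply Rmin_glb_lt; auto). lra.
Qed.

Lemma gamma_bound z : -1 < z -> exists M, forall u v, 0 < u -> u < v ->
  RInt (fun s => Rpower s z * exp (- s)) u v <= M.
Proof.
  intros Hz.
  set (Z := Rabs z + 1). assert (HZ : 0 < Z) by (unfold Z; pose proof (Rabs_pos z); lra).
  set (K := exp (Z * (ln (2 * Z) - 1))). assert (HK : 0 < K) by apply exp_pos.
  exists (/ (z + 1) + 2 * K).
  intros u v Hu Huv.
  set (f := fun s => Rpower s z * exp (- s)).
  assert (Hfc : forall s, 0 < s -> continuous f s).
  { intros s Hs. apply cont_mult_R. apply cont_Rpower; auto. contR. }
  assert (Hfp : forall s, 0 < s -> 0 <= f s).
  { intros s Hs. unfold f. apply Rmult_le_pos; apply Rlt_le, exp_pos. }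
  set (u' := Rmin u 1). set (v' := Rmax v 1).
  assert (Hu' : 0 < u') by (apply Rmin_glb_lt; lra).
  assert (Hu'1 : u' <= 1) by apply Rmin_r. assert (Hv'1 : 1 <= v') by apply Rmax_r.
  assert (H1 : RInt f u v <= RInt f u' v').
  { apply RInt_extend; auto. apply Rmin_l. lra. apply Rmax_l. }
  assert (E := @RInt_Chasles R_CompleteNormedModule f u' 1 v' ltac:(apply exRI; auto; lra) ltac:(apply exRI; auto; lra)).
  simpl in E; unfold plus in E; simpl in E.
  assert (H2 : RInt f u' 1 <= / (z + 1)).
  { apply Rle_trans with (RInt (fun s => Rpower s z) u' 1).
    - apply RInt_le; [lra | apply exRI; auto; lra | apply exRI; [intros; apply cont_Rpower; auto|lra|lra] | ].
      intros s Hs. unfold f. rewrite <- (Rmult_1_r (Rpower s z)) at 2. apply Rmult_le_compat_l.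
      apply Rlt_le, exp_pos. rewrite <- exp_0. apply exp_le; lra.
    - rewrite RInt_Rpower by lra. rewrite Rpower_1_base.
      assert (0 < / (z + 1) * Rpower u' (z + 1)) by (apply Rmult_lt_0_compat; [apply Rinv_0_lt_compat; lra| apply exp_pos]).
      lra. }
  assert (H3 : RInt f 1 v' <= 2 * K).
  { apply Rle_trans with (RInt (fun s => K * exp (- s / 2)) 1 v').
    - apply RInt_le; [lra | apply exRI; auto; lra | apply exRI; [intros; contR|lra|lra] | ].
      intros s Hs. unfold f.
      assert (Rpower s z <= K * exp (s / 2)).
      { apply Rle_trans with (Rpower s Z). apply Rpower_exp_mono. lra. unfold Z. pose proof (Rle_abs z); lra.
        apply pow_exp_bound; lra. }
      replace (K * exp (- s / 2)) with (K * exp (s / 2) * exp (- s)).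
      apply Rmult_le_compat_r; auto. apply Rlt_le, exp_pos.
      rewrite Rmult_assoc, <- exp_plus. f_equal. f_equal. field.
    - assert (HI : is_RInt (fun s => K * exp (- s / 2)) 1 v' (minus ((fun s => - 2 * K * exp (- s / 2)) v') ((fun s => - 2 * K * exp (- s / 2)) 1))).
      { apply (@is_RInt_derive R_CompleteNormedModule (fun s => - 2 * K * exp (- s / 2)) (fun s => K * exp (- s / 2)) 1 v').
        - intros s _. auto_derive; auto. unfold Rdiv. set (e := exp _). field.
        - intros s _. contR. }
      rewrite (is_RInt_unique _ _ _ _ HI). unfold minus, plus, opp; simpl.
      assert (0 < exp (- v' / 2)) by apply exp_pos.
      assert (exp (- (1) / 2) <= 1) by (apply Rle_trans with (exp 0); [apply exp_le; lra| rewrite exp_0; lra]).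
      assert (K * exp (- (1) / 2) <= K * 1) by (apply Rmult_le_compat_l; lra).
      assert (0 < K * exp (- v' / 2)) by (apply Rmult_lt_0_compat; lra).
      lra. }
  lra.
Qed.

Lemma gamma_intlim z : -1 < z -> IntLim (fun s => Rpower s z * exp (- s)) (Gamma (z + 1)).
Proof.
  intros Hz. destruct (gamma_bound z Hz) as [M HM].
  destruct (intlim_exists (fun s => Rpower s z * exp (- s)) M) as (L & HL & HG).
  - intros s Hs. apply cont_mult_R. apply cont_Rpower; auto. contR.
  - intros s Hs. apply Rmult_le_pos; apply Rlt_le, exp_pos.
  - exact HM.
  - rewrite (Gamma_eq z L HG). exact HL.
Qed.


Lemma zsum_ext f g : (forall j, f j = g j) -> zsum f = zsum g.
Proof. intros H. unfold zsum, zpos, zneg. rewrite (Series_ext _ (fun n => g (Z.of_nat n))), (Series_ext (fun n => f _) (fun n => g (- Z.of_nat n - 1)%Z)); auto. Qed.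

Lemma zsummable_ext f g : (forall j, f j = g j) -> zsummable f -> zsummable g.
Proof. intros H [H1 H2]; split.
  - apply (ex_series_ext (zpos f)); auto. intros n; unfold zpos; auto.
  - apply (ex_series_ext (zneg f)); auto. intros n; unfold zneg; auto. Qed.

Lemma RInt_ext_R (f g : R -> R) u v : (forall s, f s = g s) -> RInt f u v = RInt g u v.
Proof. intros H. apply (@RInt_ext R_CompleteNormedModule). intros; apply H. Qed.

Lemma div_le_of A B d : 0 < d -> A <= B * d -> A / d <= B.
Proof. intros Hd H. apply Rle_div_l; lra. Qed.

Lemma le_div_of A B d : 0 < d -> A * d <= B -> A <= B / d.
Proof. intros Hd H. unfold Rdiv. apply Rmult_le_reg_r with d; auto. rewrite Rmult_assoc, Rinv_l; lra. Qed.

Lemma ex_series_geomC C r : 0 <= r < 1 -> ex_series (fun n => C * r ^ n).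
Proof.
  intros Hr. apply (ex_series_ext (fun n => scal C (r ^ n))). intros; reflexivity.
  apply (@ex_series_scal_l R_AbsRing R_NormedModule). apply ex_series_geom. rewrite Rabs_pos_eq; lra.
Qed.

Lemma zsummable_geom f C1 r1 C2 r2 : (forall j, 0 <= f j) ->
  (forall n, f (Z.of_nat n) <= C1 * r1 ^ n) -> (forall n, f (- Z.of_nat n - 1)%Z <= C2 * r2 ^ n) ->
  0 <= r1 < 1 -> 0 <= r2 < 1 -> zsummable f.
Proof.
  intros H0 H1 H2 Hr1 Hr2. split.
  - apply (@ex_series_le R_AbsRing R_CompleteNormedModule _ (fun n => C1 * r1 ^ n)); [|apply ex_series_geomC; auto].
    intros n. change (norm (zpos f n)) with (Rabs (zpos f n)). unfold zpos. rewrite Rabs_pos_eq; auto.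
  - apply (@ex_series_le R_AbsRing R_CompleteNormedModule _ (fun n => C2 * r2 ^ n)); [|apply ex_series_geomC; auto].
    intros n. change (norm (zneg f n)) with (Rabs (zneg f n)). unfold zneg. rewrite Rabs_pos_eq; auto.
Qed.

Lemma Rpower_base_mono z u v : 0 <= z -> 0 < u <= v -> Rpower u z <= Rpower v z.
Proof. intros. apply Rle_Rpower_l; auto. Qed.

Lemma Rpower_base_anti z u v : z <= 0 -> 0 < u <= v -> Rpower v z <= Rpower u z.
Proof.
  intros Hz Huv. unfold Rpower. apply exp_le. apply Rmult_le_compat_neg_l; auto. apply ln_le; lra.
Qed.

Lemma Rpower_lt1 a z : 0 < a < 1 -> 0 < z -> Rpower a z < 1.
Proof.
  intros Ha Hz. unfold Rpower. rewrite <- exp_0. apply exp_increasing.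
  assert (ln a < 0) by (rewrite <- ln_1; apply ln_increasing; lra). nra.
Qed.

Lemma Rpower_gt1 a z : 0 < a < 1 -> z < 0 -> 1 < Rpower a z.
Proof.
  intros Ha Hz. unfold Rpower. rewrite <- exp_0. apply exp_increasing.
  assert (ln a < 0) by (rewrite <- ln_1; apply ln_increasing; lra). nra.
Qed.

Lemma Rpower_opp a z : Rpower a (- z) = / Rpower a z.
Proof. apply Rpower_Ropp. Qed.

Lemma powerRZ_negS q n : 0 < q -> powerRZ q (- Z.of_nat n - 1) = / q * (/ q) ^ n.
Proof.
  intros Hq. replace (- Z.of_nat n - 1)%Z with (- Z.of_nat (Datatypes.S n))%Z by lia.
  rewrite powerRZ_neg', <- pow_powerRZ. simpl. rewrite pow_inv. field. split; [apply pow_nonzero|]; lra.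
Qed.

Lemma yy_neg a x n : 0 < a -> yy a x (- Z.of_nat n - 1) = x * / a * (/ a) ^ n.
Proof. intros Ha. unfold yy. rewrite powerRZ_negS; auto. ring. Qed.

Lemma yy_posn a x n : yy a x (Z.of_nat n) = x * a ^ n.
Proof. unfold yy. rewrite <- pow_powerRZ. reflexivity. Qed.

Lemma h1_main a x z : 0 < a < 1 -> 0 < x -> 0 < z ->
  let T := fun j => Rpower (yy a x j) z * exp (- yy a x j) in
  zsummable T /\
  Gamma (z + 1) / (Rpower a (- z) - 1) <= zsum T <= Rpower a (- z) * Gamma (z + 1) / (Rpower a (- z) - 1).
Proof.
  intros [Ha0 Ha1] Hx Hz T.
  set (q := Rpower a z). assert (Hq0 : 0 < q) by apply exp_pos.
  assert (Hq1 : q < 1) by (apply Rpower_lt1; auto).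
  assert (HW : forall j, Rpower (yy a x j) z = Rpower x z * powerRZ q j) by (intros; apply yy_W; auto).
  assert (Hsum : zsummable T).
  { set (K := exp (z * (ln (2 * z) - 1))).
    apply (zsummable_geom T (Rpower x z) q (2 * K * a / x) a).
    - intros j. unfold T. apply Rmult_le_pos; apply Rlt_le, exp_pos.
    - intros n. unfold T. rewrite HW, <- pow_powerRZ.
      rewrite <- (Rmult_1_r (Rpower x z * q ^ n)) at 2. apply Rmult_le_compat_l.
      apply Rmult_le_pos; [apply Rlt_le, exp_pos| apply pow_le; lra].
      apply Rle_trans with (exp 0); [apply exp_le| rewrite exp_0; lra].
      pose proof (yy_pos a x Ha0 Hx (Z.of_nat n)); lra.
    - intros n. unfold T. set (y := yy a x (- Z.of_nat n - 1)).
      assert (Hy : 0 < y) by (apply yy_pos; auto).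
      assert (B1 : Rpower y z <= K * exp (y / 2)) by (apply pow_exp_bound; auto).
      assert (B2 : Rpower y z * exp (- y) <= K * exp (- y / 2)).
      { replace (K * exp (- y / 2)) with (K * exp (y / 2) * exp (- y)).
        apply Rmult_le_compat_r; auto. apply Rlt_le, exp_pos.
        rewrite Rmult_assoc, <- exp_plus. f_equal. f_equal. field. }
      assert (B3 : exp (- y / 2) <= 2 / y).
      { pose proof (exp_ineq1_le (y / 2)). assert (Hp := exp_pos (y / 2)).
        replace (- y / 2) with (- (y / 2)) by field. rewrite exp_Ropp.
        apply Rle_trans with (/ (y / 2)). apply Rinv_le_contravar; lra. right; field; lra. }
      assert (HK : 0 < K) by apply exp_pos.
      assert (Ey : 2 / y = 2 * a / x * a ^ n).
      { unfold y. rewrite yy_neg by auto. rewrite pow_inv. field. repeat split; try lra; apply pow_nonzero; lra. }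
      apply Rle_trans with (K * exp (- y / 2)); auto.
      replace (2 * K * a / x * a ^ n) with (K * (2 / y)) by (rewrite Ey; field; lra).
      apply Rmult_le_compat_l; lra.
    - lra.
    - lra. }
  split; [exact Hsum|].
  assert (HL : IntLim (fun s => Rpower s z * (- exp (- s))) (- Gamma (z + 1))).
  { intros eps He. destruct (gamma_intlim z ltac:(lra) eps He) as (a0 & b0 & H1 & H2 & H3).
    exists a0, b0. repeat split; auto. intros u v Hu Hua Hvb.
    rewrite (RInt_ext_R _ (fun s => -1 * (Rpower s z * exp (- s)))) by (intros; ring).
    rewrite RInt_scal_R. 2: apply exRI; auto; [intros; apply cont_mult_R; [apply cont_Rpower; auto| contR]|lra].
    replace (-1 * RInt (fun s : R => Rpower s z * exp (- s)) u v - - Gamma (z + 1))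
      with (- (RInt (fun s : R => Rpower s z * exp (- s)) u v - Gamma (z + 1))) by ring.
    rewrite Rabs_Ropp. apply H3; auto. }
  destruct (abstract_bound a x z (- Gamma (z + 1)) (fun y => exp (- y)) (fun s => - exp (- s)) Ha0 Ha1 Hx)
    as [A1 A2]; auto.
  - intros s _. auto_derive; auto. ring.
  - intros s _. contR.
  - intros y s Hy Hs. assert (E := exp_pos (- s)). assert (0 < a * y) by nra. split.
    + rewrite !Ropp_mult_distr_r_reverse. apply Ropp_le_contravar, Rmult_le_compat_r; [lra|].
      apply Rpower_base_mono; lra.
    + rewrite !Ropp_mult_distr_r_reverse. apply Ropp_le_contravar, Rmult_le_compat_r; [lra|].
      apply Rpower_base_mono; lra.
  - fold q in A1, A2. fold T in A1, A2. rewrite Rpower_opp. fold q.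
    assert (Hp : 1 < / q) by (rewrite <- Rinv_1; apply Rinv_lt_contravar; lra).
    split.
    + apply div_le_of; [lra|]. assert ((/ q - 1) = - (1 - / q)) by ring. nra.
    + apply le_div_of; [lra|].
      assert (E : zsum T * (/ q - 1) = / q * ((1 - q) * zsum T)) by (field; lra).
      rewrite E. apply Rmult_le_compat_l; [lra|]. nra.
Qed.


Lemma RInt_plus_R (f g : R -> R) u v : ex_RInt f u v -> ex_RInt g u v ->
  RInt (fun s => f s + g s) u v = RInt f u v + RInt g u v.
Proof. intros H1 H2. apply (@RInt_plus R_CompleteNormedModule); auto. Qed.

Lemma RInt_ext_pos (f g : R -> R) u v : 0 < u -> 0 < v -> (forall s, 0 < s -> f s = g s) -> RInt f u v = RInt g u v.
Proof. intros Hu Hv H. apply (@RInt_ext R_CompleteNormedModule). intros s Hs; apply H.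
  assert (0 < Rmin u v) by (apply Rmin_glb_lt; auto). lra. Qed.

Lemma h2_bounds a x z J (G g : R -> R) : 0 < a < 1 -> 0 < x -> z < 0 ->
  (forall s, 0 < s -> is_derive G s (g s)) -> (forall s, 0 < s -> continuous g s) ->
  (forall s, 0 < s -> 0 <= g s) ->
  zsummable (fun j => Rpower (yy a x j) z * G (yy a x j)) ->
  IntLim (fun s => Rpower s z * g s) J ->
  Rpower a (- z) * J / (1 - Rpower a (- z)) <= zsum (fun j => Rpower (yy a x j) z * G (yy a x j))
   <= J / (1 - Rpower a (- z)).
Proof.
  intros [Ha0 Ha1] Hx Hz HG Hgc Hgp Hs HL.
  destruct (abstract_bound a x z J G g Ha0 Ha1 Hx HG Hgc) as [A1 A2]; auto.
  - intros y s Hy Hs'. assert (E := Hgp s ltac:(nra)). assert (0 < a * y) by nra. split.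
    + apply Rmult_le_compat_r; auto. apply Rpower_base_anti; lra.
    + apply Rmult_le_compat_r; auto. apply Rpower_base_anti; lra.
  - set (S := zsum _) in *. set (q := Rpower a z) in *.
    assert (Hq : 1 < q) by (apply Rpower_gt1; auto).
    rewrite Rpower_opp. fold q.
    assert (Hp : / q < 1) by (rewrite <- Rinv_1; apply Rinv_lt_contravar; lra).
    assert (Hp0 : 0 < / q) by (apply Rinv_0_lt_compat; lra).
    split.
    + apply div_le_of; [lra|].
      assert (E : S * (1 - / q) = / q * ((q - 1) * S)) by (field; lra).
      rewrite E. apply Rmult_le_compat_l; lra.
    + apply le_div_of; [lra|]. rewrite Rmult_comm; exact A1.
Qed.

Lemma h2_main a x z : 0 < a < 1 -> 0 < x -> -1 < z < 0 ->
  let T := fun j => Rpower (yy a x j) z * (1 - exp (- yy a x j)) in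
  zsummable T /\
  Rpower a (- z) * Gamma (z + 1) / (1 - Rpower a (- z)) <= zsum T <= Gamma (z + 1) / (1 - Rpower a (- z)).
Proof.
  intros [Ha0 Ha1] Hx [Hz1 Hz] T.
  set (q := Rpower a z). assert (Hq0 : 0 < q) by apply exp_pos.
  assert (Hq1 : 1 < q) by (apply Rpower_gt1; auto).
  assert (HW : forall j, Rpower (yy a x j) z = Rpower x z * powerRZ q j) by (intros; apply yy_W; auto).
  assert (Hsum : zsummable T).
  { apply (zsummable_geom T (Rpower x z * x) (q * a) (Rpower x z * / q) (/ q)).
    - intros j. unfold T. apply Rmult_le_pos. apply Rlt_le, exp_pos.
      assert (exp (- yy a x j) <= 1); [|lra].
      apply Rle_trans with (exp 0); [apply exp_le| rewrite exp_0; lra].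
      pose proof (yy_pos a x Ha0 Hx j); lra.
    - intros n. unfold T. rewrite HW, <- pow_powerRZ, yy_posn.
      assert (1 - exp (- (x * a ^ n)) <= x * a ^ n) by (pose proof (exp_ineq1_le (- (x * a ^ n))); lra).
      assert (0 < Rpower x z * q ^ n) by (apply Rmult_lt_0_compat; [apply exp_pos| apply pow_lt; lra]).
      rewrite Rpow_mult_distr.
      replace (Rpower x z * x * (q ^ n * a ^ n)) with (Rpower x z * q ^ n * (x * a ^ n)) by ring.
      apply Rmult_le_compat_l; lra.
    - intros n. unfold T. rewrite HW, powerRZ_negS by lra.
      assert (0 <= 1 - exp (- yy a x (- Z.of_nat n - 1))).
      { assert (exp (- yy a x (- Z.of_nat n - 1)) <= 1); [|lra].
        apply Rle_trans with (exp 0); [apply exp_le| rewrite exp_0; lra].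
        pose proof (yy_pos a x Ha0 Hx (- Z.of_nat n - 1)); lra. }
      assert (exp (- yy a x (- Z.of_nat n - 1)) > 0) by apply exp_pos.
      assert (0 < Rpower x z * (/ q * (/ q) ^ n)) by (apply Rmult_lt_0_compat; [apply exp_pos| apply Rmult_lt_0_compat; [apply Rinv_0_lt_compat; lra| apply pow_lt; apply Rinv_0_lt_compat; lra]]).
      replace (Rpower x z * / q * (/ q) ^ n) with (Rpower x z * (/ q * (/ q) ^ n) * 1) by ring.
      apply Rmult_le_compat_l; lra.
    - split. nra. replace (q * a) with (Rpower a (z + 1)).
      apply Rpower_lt1; lra. unfold q. rewrite Rpower_plus, Rpower_1; auto.
    - split. apply Rlt_le, Rinv_0_lt_compat; lra. rewrite <- Rinv_1; apply Rinv_lt_contravar; lra. }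
  split; [exact Hsum|].
  apply (h2_bounds a x z (Gamma (z + 1)) (fun y => 1 - exp (- y)) (fun s => exp (- s))); auto.
  - intros s _. auto_derive; auto. ring.
  - intros s _. contR.
  - intros s _. apply Rlt_le, exp_pos.
  - apply gamma_intlim; lra.
Qed.

Lemma IntLim_comb (f1 f3 : R -> R) L al be :
  IntLim f1 L ->
  (forall u v, 0 < u -> u < v -> RInt f3 u v = al * RInt f1 u v + be * RInt f1 (2 * u) (2 * v)) ->
  IntLim f3 ((al + be) * L).
Proof.
  intros HL HE eps He.
  set (k := Rabs al + Rabs be + 1).
  assert (Hk : 0 < k) by (unfold k; pose proof (Rabs_pos al); pose proof (Rabs_pos be); lra).
  destruct (HL (eps / k) ltac:(apply Rdiv_lt_0_compat; auto)) as (a0 & b0 & H1 & H2 & H3).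
  exists (a0 / 2), b0. repeat split; try lra. intros u v Hu Hua Hvb.
  rewrite HE by lra.
  assert (E1 := H3 u v Hu ltac:(lra) Hvb).
  assert (E2 := H3 (2 * u) (2 * v) ltac:(lra) ltac:(lra) ltac:(lra)).
  replace (al * RInt f1 u v + be * RInt f1 (2 * u) (2 * v) - (al + be) * L)
    with (al * (RInt f1 u v - L) + be * (RInt f1 (2 * u) (2 * v) - L)) by ring.
  eapply Rle_lt_trans. apply Rabs_triang. rewrite !Rabs_mult.
  assert (Rabs al * Rabs (RInt f1 u v - L) <= Rabs al * (eps / k)) by (apply Rmult_le_compat_l; [apply Rabs_pos| lra]).
  assert (Rabs be * Rabs (RInt f1 (2 * u) (2 * v) - L) <= Rabs be * (eps / k)) by (apply Rmult_le_compat_l; [apply Rabs_pos| lra]).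
  assert ((Rabs al + Rabs be) * (eps / k) < eps).
  { unfold Rdiv. replace eps with (k * (eps * / k)) at 2 by (field; lra).
    apply Rmult_lt_compat_r. apply Rmult_lt_0_compat; auto; apply Rinv_0_lt_compat; auto. unfold k; lra. }
  lra.
Qed.

Lemma gamma3_intlim z : -1 < z ->
  IntLim (fun s => Rpower s z * (2 * (1 - exp (- s)) * exp (- s))) ((2 - Rpower 2 (- z)) * Gamma (z + 1)).
Proof.
  intros Hz. replace (2 - Rpower 2 (- z)) with (2 + - Rpower 2 (- z)) by ring.
  apply (IntLim_comb (fun s => Rpower s z * exp (- s))). apply gamma_intlim; auto.
  intros u v Hu Huv.
  set (f1 := fun s => Rpower s z * exp (- s)).
  assert (Hc1 : forall s, 0 < s -> continuous f1 s) by (intros; apply cont_mult_R; [apply cont_Rpower; auto| contR]).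
  set (f2 := fun s => Rpower s z * exp (- (2 * s))).
  assert (Hc2 : forall s, 0 < s -> continuous f2 s) by (intros; apply cont_mult_R; [apply cont_Rpower; auto| contR]).
  rewrite (RInt_ext_R _ (fun s => 2 * f1 s + (-2) * f2 s)).
  2: { intros s. unfold f1, f2. replace (- (2 * s)) with (- s + - s) by ring. rewrite exp_plus. ring. }
  rewrite RInt_plus_R. 2,3: apply exRI; auto; [intros; apply cont_mult_R; [apply continuous_const| auto]| lra].
  rewrite !RInt_scal_R by (apply exRI; auto; lra).
  assert (C := @RInt_comp_lin R_CompleteNormedModule f1 2 0 u v).
  rewrite !Rplus_0_r in C. rewrite <- C by (apply exRI; auto; lra).
  rewrite (RInt_ext_pos (fun y => scal 2 (f1 (2 * y + 0))) (fun y => (2 * Rpower 2 z) * f2 y)); try lra.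
  2: { intros s Hs. unfold scal; simpl; unfold mult; simpl. unfold f1, f2. rewrite Rplus_0_r.
       rewrite <- Rpower_mult_distr by lra. ring. }
  rewrite RInt_scal_R by (apply exRI; auto; lra).
  rewrite Rpower_opp. field_simplify. 2: apply Rgt_not_eq, exp_pos. 
  reflexivity.
Qed.

Lemma h3_main a x z : 0 < a < 1 -> 0 < x -> -1 < z < 0 ->
  let T := fun j => Rpower (yy a x j) z * (1 - exp (- yy a x j)) ^ 2 in
  zsummable T /\
  Rpower a (- z) * (2 - Rpower 2 (- z)) * Gamma (z + 1) / (1 - Rpower a (- z)) <= zsum T <=
  (2 - Rpower 2 (- z)) * Gamma (z + 1) / (1 - Rpower a (- z)).
Proof.
  intros Ha Hx Hz T.
  destruct (h2_main a x z Ha Hx Hz) as [H2s _].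
  assert (Hsum : zsummable T).
  { apply (zsummable_le T (fun j => Rpower (yy a x j) z * (1 - exp (- yy a x j)))); auto.
    intros j. unfold T. assert (0 < yy a x j) by (apply yy_pos; lra).
    assert (exp (- yy a x j) <= 1) by (apply Rle_trans with (exp 0); [apply exp_le; lra| rewrite exp_0; lra]).
    assert (0 < exp (- yy a x j)) by apply exp_pos.
    assert (0 < Rpower (yy a x j) z) by apply exp_pos.
    split. apply Rmult_le_pos; [lra| apply pow2_ge_0].
    apply Rmult_le_compat_l; [lra|]. simpl. nra. }
  split; [exact Hsum|].
  rewrite !Rmult_assoc.
  replace (Rpower a (- z) * ((2 - Rpower 2 (- z)) * (Gamma (z + 1) * / (1 - Rpower a (- z)))))
    with (Rpower a (- z) * ((2 - Rpower 2 (- z)) * Gamma (z + 1)) / (1 - Rpower a (- z))) by (unfold Rdiv; ring).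
  replace ((2 - Rpower 2 (- z)) * (Gamma (z + 1) * / (1 - Rpower a (- z))))
    with ((2 - Rpower 2 (- z)) * Gamma (z + 1) / (1 - Rpower a (- z))) by (unfold Rdiv; ring).
  apply (h2_bounds a x z _ (fun y => (1 - exp (- y)) ^ 2) (fun s => 2 * (1 - exp (- s)) * exp (- s))); auto; try lra.
  - intros s _. auto_derive; auto. ring.
  - intros s _. contR.
  - intros s Hs. assert (exp (- s) <= 1) by (apply Rle_trans with (exp 0); [apply exp_le; lra| rewrite exp_0; lra]).
    assert (0 < exp (- s)) by apply exp_pos. nra.
  - apply gamma3_intlim; lra.
Qed.


Lemma cont_plus_R (f g : R -> R) x : continuous f x -> continuous g x -> continuous (fun s => f s + g s) x.
Proof. intros Hf Hg. apply (@continuous_plus R_UniformSpace R_AbsRing R_NormedModule f g x Hf Hg). Qed.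

Lemma RInt_const_R c u v : RInt (fun _ => c) u v = (v - u) * c.
Proof. rewrite (@RInt_const R_CompleteNormedModule). reflexivity. Qed.

Lemma ZS_scal f k n : ZS (fun j => k * f j) n = k * ZS f n.
Proof. induction n; simpl; unfold zpos, zneg in *; rewrite ?IHn; ring. Qed.

Lemma ZS_nonneg f n : (forall j, 0 <= f j) -> 0 <= ZS f n.
Proof. intros H. assert (H1 := ZS_mono (fun j => 0 * f j) f n ltac:(intros j; specialize (H j); lra)).
  rewrite ZS_scal in H1. lra. Qed.

Lemma yy_scale a x r j : yy a (r * x) j = r * yy a x j.
Proof. unfold yy; ring. Qed.

Lemma eps_lemma_up X c P : 0 <= P -> (forall e, 0 < e < 1 -> X <= c + e * P) -> X <= c.
Proof.
  intros HP H. destruct (Rle_lt_dec X c) as [|Hlt]; auto.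
  set (e := Rmin (1/2) ((X - c) / (2 * (P + 1)))).
  assert (He : 0 < e < 1).
  { unfold e. split. apply Rmin_glb_lt; [lra| apply Rdiv_lt_0_compat; lra]. pose proof (Rmin_l (1/2) ((X - c) / (2 * (P + 1)))); lra. }
  specialize (H e He).
  assert (e <= (X - c) / (2 * (P + 1))) by apply Rmin_r.
  assert (e * P <= (X - c) / (2 * (P + 1)) * P) by (apply Rmult_le_compat_r; lra).
  assert ((X - c) / (2 * (P + 1)) * P < X - c).
  { unfold Rdiv. apply Rmult_lt_reg_r with (2 * (P + 1)); [lra|].
    replace ((X - c) * / (2 * (P + 1)) * P * (2 * (P + 1))) with ((X - c) * P) by (field; lra). nra. }
  lra.
Qed.

Lemma eps_lemma_low X c : (forall e, 0 < e < 1 -> c - e * Rabs c <= X) -> c <= X.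
Proof.
  intros H. destruct (Rle_lt_dec c X) as [|Hlt]; auto.
  set (e := Rmin (1/2) ((c - X) / (2 * (Rabs c + 1)))).
  assert (He : 0 < e < 1).
  { unfold e. split. apply Rmin_glb_lt; [lra| apply Rdiv_lt_0_compat; pose proof (Rabs_pos c); lra]. pose proof (Rmin_l (1/2) ((c - X) / (2 * (Rabs c + 1)))); lra. }
  specialize (H e He). pose proof (Rabs_pos c).
  assert (e <= (c - X) / (2 * (Rabs c + 1))) by apply Rmin_r.
  assert (e * Rabs c <= (c - X) / (2 * (Rabs c + 1)) * Rabs c) by (apply Rmult_le_compat_r; lra).
  assert ((c - X) / (2 * (Rabs c + 1)) * Rabs c < c - X).
  { unfold Rdiv. apply Rmult_lt_reg_r with (2 * (Rabs c + 1)); [lra|].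
    replace ((c - X) * / (2 * (Rabs c + 1)) * Rabs c * (2 * (Rabs c + 1))) with ((c - X) * Rabs c) by (field; lra). nra. }
  lra.
Qed.

Section Tilde.
Variables (a x z Blow Bup : R) (G : R -> R).
Hypotheses (Ha0 : 0 < a) (Ha1 : a < 1) (Hx : 0 < x) (Hz1 : -1 < z) (Hz : z < 0).
Hypothesis HGc : forall y r, continuous (fun r => G (r * y)) r.
Hypothesis HGm : forall u v, 0 <= u <= v -> G u <= G v.
Hypothesis HG0 : forall u, 0 <= u -> 0 <= G u.
Definition TT (x' : R) := fun j => Rpower (yy a x' j) z * G (yy a x' j).
Hypothesis HB : forall x', 0 < x' -> zsummable (TT x') /\ Blow <= zsum (TT x') <= Bup.

Definition Tt := fun j => RInt (fun r => Rpower (yy a x j) z * G (r * yy a x j)) 0 1.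
Definition FN (n : nat) (r : R) := ZS (fun j => Rpower (yy a x j) z * G (r * yy a x j)) n.

Lemma TT_nonneg x' j : 0 < x' -> 0 <= TT x' j.
Proof. intros H. unfold TT. apply Rmult_le_pos. apply Rlt_le, exp_pos. apply HG0. apply Rlt_le, yy_pos; auto. Qed.

Lemma FN_cont n r : continuous (FN n) r.
Proof.
  induction n; unfold FN; simpl; unfold zpos, zneg.
  - apply cont_plus_R; apply cont_mult_R; auto; apply continuous_const.
  - apply cont_plus_R; [apply cont_plus_R|]; auto; apply cont_mult_R; auto; apply continuous_const.
Qed.

Lemma exRI01 (f : R -> R) u v : (forall r, continuous f r) -> ex_RInt f u v.
Proof. intros H. apply (@ex_RInt_continuous R_CompleteNormedModule). intros; auto. Qed.

Lemma FN_int n : RInt (FN n) 0 1 = ZS Tt n.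
Proof.
  induction n; unfold FN in *; simpl; unfold zpos, zneg, Tt.
  - rewrite RInt_plus_R; auto; apply exRI01; intros; apply cont_mult_R; auto; apply continuous_const.
  - rewrite RInt_plus_R; [|apply exRI01; intros; apply cont_plus_R; [apply (FN_cont n)|]; apply cont_mult_R; auto; apply continuous_const
      | apply exRI01; intros; apply cont_mult_R; auto; apply continuous_const].
    rewrite RInt_plus_R; [|apply exRI01; apply (FN_cont n)| apply exRI01; intros; apply cont_mult_R; auto; apply continuous_const].
    unfold FN in IHn. rewrite IHn. reflexivity.
Qed.

Lemma Tt_bounds j : 0 <= Tt j <= TT x j.
Proof.
  unfold Tt, TT. assert (Hy := yy_pos a x Ha0 Hx j). assert (HW := exp_pos (z * ln (yy a x j))).
  change (exp (z * ln (yy a x j))) with (Rpower (yy a x j) z) in HW.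
  split.
  - apply RInt_ge_0; [lra| apply exRI01; intros; apply cont_mult_R; auto; apply continuous_const|].
    intros r Hr. apply Rmult_le_pos; [lra|]. apply HG0. nra.
  - assert (E : @eq R (RInt (fun _ => Rpower (yy a x j) z * G (yy a x j)) 0 1) (Rpower (yy a x j) z * G (yy a x j)))
      by (rewrite RInt_const_R; ring).
    rewrite <- E.
    apply RInt_le; [lra| apply exRI01; intros; apply cont_mult_R; auto; apply continuous_const| apply exRI01; intros; apply continuous_const|].
    intros r Hr. apply Rmult_le_compat_l; [lra|]. apply HGm. split; nra.
Qed.

Lemma Tt_summable : zsummable Tt.
Proof. apply (zsummable_le Tt (TT x)). apply Tt_bounds. apply HB; auto. Qed.

Lemma FN_scale n r : 0 < r -> FN n r = Rpower r (- z) * ZS (TT (r * x)) n.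
Proof.
  intros Hr. unfold FN. rewrite <- ZS_scal. apply ZS_ext. intros j. unfold TT.
  rewrite yy_scale. rewrite <- Rpower_mult_distr by (auto; apply yy_pos; auto).
  replace (Rpower r (- z) * (Rpower r z * Rpower (yy a x j) z * G (r * yy a x j)))
    with ((Rpower r (- z) * Rpower r z) * (Rpower (yy a x j) z * G (r * yy a x j))) by ring.
  rewrite Rpower_opp, Rinv_l. ring. apply Rgt_not_eq, exp_pos.
Qed.


Lemma FN_le_P n r : 0 <= r <= 1 -> 0 <= FN n r <= ZS (TT x) n.
Proof.
  intros Hr. unfold FN. split.
  - apply ZS_nonneg. intros j. apply Rmult_le_pos; [apply Rlt_le, exp_pos|]. apply HG0.
    pose proof (yy_pos a x Ha0 Hx j); nra.
  - apply ZS_mono. intros j. unfold TT. apply Rmult_le_compat_l; [apply Rlt_le, exp_pos|].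
    apply HGm. pose proof (yy_pos a x Ha0 Hx j); split; nra.
Qed.

Lemma FN_up n r : 0 < r -> FN n r <= Rpower r (- z) * Bup.
Proof.
  intros Hr. rewrite FN_scale by auto. apply Rmult_le_compat_l; [apply Rlt_le, exp_pos|].
  destruct (HB (r * x) ltac:(nra)) as [Hs [_ Hu]].
  apply Rle_trans with (zsum (TT (r * x))); auto.
  apply ZS_le_zsum; auto. intros; apply TT_nonneg; nra.
Qed.

Lemma FN_low n r : 0 < r <= 1 -> Rpower r (- z) * Blow - (zsum (TT x) - ZS (TT x) n) <= FN n r.
Proof.
  intros Hr. rewrite FN_scale by lra.
  destruct (HB (r * x) ltac:(nra)) as [Hs [Hl _]].
  destruct (HB x Hx) as [Hs0 _].
  set (D := fun j => Rpower r z * TT x j + (-1) * TT (r * x) j).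
  assert (HD : forall j, 0 <= D j).
  { intros j. unfold D, TT. rewrite yy_scale, <- Rpower_mult_distr by (try lra; apply yy_pos; auto).
    assert (Hy := yy_pos a x Ha0 Hx j).
    assert (G (r * yy a x j) <= G (yy a x j)) by (apply HGm; split; nra).
    assert (0 < Rpower r z * Rpower (yy a x j) z) by (apply Rmult_lt_0_compat; apply exp_pos).
    nra. }
  assert (H1 := ZS_le_zsum D n HD ltac:(apply zsummable_lin; auto)).
  unfold D in H1. rewrite ZS_lin, zsum_lin in H1 by auto.
  assert (Hrz : Rpower r (- z) * Rpower r z = 1) by (rewrite Rpower_opp; apply Rinv_l, Rgt_not_eq, exp_pos).
  assert (Hp : 0 < Rpower r (- z)) by apply exp_pos.
  assert (ZS (TT (r * x)) n >= zsum (TT (r * x)) - Rpower r z * (zsum (TT x) - ZS (TT x) n)) by lra.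
  apply Rle_trans with (Rpower r (- z) * (zsum (TT (r * x)) - Rpower r z * (zsum (TT x) - ZS (TT x) n))).
  - replace (Rpower r (- z) * (zsum (TT (r * x)) - Rpower r z * (zsum (TT x) - ZS (TT x) n)))
      with (Rpower r (- z) * zsum (TT (r * x)) - (Rpower r (- z) * Rpower r z) * (zsum (TT x) - ZS (TT x) n)) by ring.
    rewrite Hrz. assert (Rpower r (- z) * Blow <= Rpower r (- z) * zsum (TT (r * x))) by (apply Rmult_le_compat_l; lra).
    lra.
  - apply Rmult_le_compat_l; lra.
Qed.

Lemma RInt_rpow e : 0 < e < 1 ->
  (@eq R (RInt (fun r => Rpower r (- z)) e 1) (/ (1 - z) * (1 - Rpower e (1 - z)))) /\
  (0 < Rpower e (1 - z) <= e).
Proof.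
  intros He. split.
  - rewrite RInt_Rpower by lra. rewrite Rpower_1_base. replace (- z + 1) with (1 - z) by ring. ring.
  - split. apply exp_pos. unfold Rpower. rewrite <- (exp_ln e) at 2 by lra. apply exp_le.
    assert (ln e < 0) by (rewrite <- ln_1; apply ln_increasing; lra). nra.
Qed.

Lemma Tt_main : zsummable Tt /\ Blow / (1 - z) <= zsum Tt <= Bup / (1 - z).
Proof.
  destruct (HB x Hx) as [Hs0 [Hl0 Hu0]].
  assert (HBup : 0 <= Bup).
  { assert (H := ZS_le_zsum (TT x) 0 (fun j => TT_nonneg x j Hx) Hs0).
    assert (0 <= ZS (TT x) 0) by (apply ZS_nonneg; intros; apply TT_nonneg; auto). lra. }
  assert (Hts := Tt_summable). split; auto.
  assert (LT := ZS_lim Tt Hts).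
  assert (Htau : is_lim_seq (fun n => zsum (TT x) - ZS (TT x) n) 0).
  { replace (Finite 0) with (Rbar_minus (zsum (TT x)) (zsum (TT x))) by (simpl; f_equal; ring).
    apply (is_lim_seq_minus _ _ (zsum (TT x)) (zsum (TT x))). apply is_lim_seq_const. apply ZS_lim; auto.
    unfold is_Rbar_minus, is_Rbar_plus; simpl. reflexivity. }
  assert (EX : forall n u v, ex_RInt (FN n) u v) by (intros; apply exRI01; intros; apply FN_cont).
  assert (Hz1' : 0 < 1 - z) by lra.
  split.
  -
    apply eps_lemma_low. intros e He.
    destruct (RInt_rpow e He) as [Ee [Hpe1 Hpe2]].
    set (c := Blow / (1 - z)).
    assert (Hn : forall n, c * (1 - Rpower e (1 - z)) - (zsum (TT x) - ZS (TT x) n) <= ZS Tt n).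
    { intros n. rewrite <- FN_int.
      assert (E := @RInt_Chasles R_CompleteNormedModule (FN n) 0 e 1 (EX n 0 e) (EX n e 1)).
      simpl in E; unfold plus in E; simpl in E. rewrite <- E.
      assert (Hpos : 0 <= RInt (FN n) 0 e) by (apply RInt_ge_0; [lra| apply EX| intros; apply FN_le_P; lra]).
      assert (tau0 : 0 <= zsum (TT x) - ZS (TT x) n) by (assert (HH := ZS_le_zsum (TT x) n (fun j => TT_nonneg x j Hx) Hs0); lra).
      assert (H0 : RInt (fun r => Rpower r (- z) * Blow + (-1) * (zsum (TT x) - ZS (TT x) n)) e 1 <= RInt (FN n) e 1).
      { apply RInt_le; [lra| apply exRI; [intros; apply cont_plus_R; [apply cont_mult_R; [apply cont_Rpower; auto| apply continuous_const]| apply continuous_const]|lra|lra]| apply EX|].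
        intros r Hr. pose proof (FN_low n r ltac:(lra)). lra. }
      rewrite RInt_plus_R in H0 by (apply exRI; [intros; try apply cont_mult_R; try apply cont_Rpower; auto; apply continuous_const|lra|lra]).
      rewrite (RInt_ext_R _ (fun r => Blow * Rpower r (- z))) in H0 by (intros; ring).
      rewrite RInt_scal_R, Ee, RInt_const_R in H0 by (apply exRI; [intros; apply cont_Rpower; auto|lra|lra]).
      unfold c. replace (Blow / (1 - z) * (1 - Rpower e (1 - z))) with (Blow * (/ (1 - z) * (1 - Rpower e (1 - z)))) by (field; lra).
      nra. }
    assert (L1 : is_lim_seq (fun n => c * (1 - Rpower e (1 - z)) - (zsum (TT x) - ZS (TT x) n)) (c * (1 - Rpower e (1 - z)) - 0)).
    { apply (is_lim_seq_minus' _ _ (c * (1 - Rpower e (1 - z))) 0); auto. apply is_lim_seq_const. }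
    assert (H := is_lim_seq_le _ _ _ _ Hn L1 LT). simpl in H.
    assert (c * Rpower e (1 - z) <= e * Rabs c).
    { apply Rle_trans with (Rabs c * Rpower e (1 - z)). apply Rmult_le_compat_r; [lra| apply Rle_abs].
      rewrite Rmult_comm. apply Rmult_le_compat_r; [apply Rabs_pos| lra]. }
    lra.
  -
    assert (Hn : forall n, ZS Tt n <= Bup / (1 - z)).
    { intros n. apply (eps_lemma_up _ _ (ZS (TT x) n)). apply ZS_nonneg; intros; apply TT_nonneg; auto.
      intros e He. destruct (RInt_rpow e He) as [Ee [Hpe1 Hpe2]].
      rewrite <- FN_int.
      assert (E := @RInt_Chasles R_CompleteNormedModule (FN n) 0 e 1 (EX n 0 e) (EX n e 1)).
      simpl in E; unfold plus in E; simpl in E. rewrite <- E.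
      assert (RInt (FN n) 0 e <= RInt (fun _ => ZS (TT x) n) 0 e).
      { apply RInt_le; [lra| apply EX| apply exRI01; intros; apply continuous_const|].
        intros r Hr. apply FN_le_P; lra. }
      rewrite RInt_const_R in H.
      assert (RInt (FN n) e 1 <= RInt (fun r => Bup * Rpower r (- z)) e 1).
      { apply RInt_le; [lra| apply EX| apply exRI; [intros; apply cont_mult_R; [apply continuous_const| apply cont_Rpower; auto]|lra|lra]|].
        intros r Hr. rewrite Rmult_comm. apply FN_up; lra. }
      rewrite RInt_scal_R, Ee in H0 by (apply exRI; [intros; apply cont_Rpower; auto|lra|lra]).
      assert (Bup * (/ (1 - z) * (1 - Rpower e (1 - z))) <= Bup / (1 - z)).
      { unfold Rdiv. rewrite <- Rmult_assoc. rewrite <- (Rmult_1_r (Bup * / (1 - z))) at 2.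
        apply Rmult_le_compat_l; [|lra]. apply Rmult_le_pos; auto. apply Rlt_le, Rinv_0_lt_compat; lra. }
      lra. }
    assert (H := is_lim_seq_le _ _ _ _ Hn LT (is_lim_seq_const (Bup / (1 - z)))). simpl in H. exact H.
Qed.

End Tilde.


Lemma Rpower_m1 y z : 0 < y -> Rpower y (z - 1) = Rpower y z * / y.
Proof. intros Hy. unfold Rminus. rewrite Rpower_plus, Rpower_Ropp, Rpower_1 by auto. reflexivity. Qed.

Lemma tilde2_term y z : 0 < y ->
  RInt (fun r => Rpower y z * (1 - exp (- (r * y)))) 0 1 = Rpower y (z - 1) * (exp (- y) - 1 + y).
Proof.
  intros Hy. rewrite RInt_scal_R by (apply exRI01; intros; contR).
  assert (HI : is_RInt (fun r => 1 - exp (- (r * y))) 0 1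
     (minus ((fun r => r + exp (- (r * y)) / y) 1) ((fun r => r + exp (- (r * y)) / y) 0))).
  { apply (@is_RInt_derive R_CompleteNormedModule (fun r => r + exp (- (r * y)) / y) (fun r => 1 - exp (- (r * y)))).
    - intros r _. auto_derive. lra. field. lra.
    - intros r _. contR. }
  rewrite (is_RInt_unique _ _ _ _ HI). unfold minus, plus, opp; simpl.
  rewrite Rpower_m1 by auto. rewrite Rmult_1_l, Rmult_0_l, Ropp_0, exp_0. field. lra.
Qed.

Lemma tilde3_term y z : 0 < y ->
  RInt (fun r => Rpower y z * (1 - exp (- (r * y))) ^ 2) 0 1 =
  Rpower y (z - 1) * (2 * exp (- y) - / 2 * exp (- (2 * y)) + y - 3 / 2).
Proof.
  intros Hy. rewrite RInt_scal_R by (apply exRI01; intros; contR).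
  assert (HI : is_RInt (fun r => (1 - exp (- (r * y))) ^ 2) 0 1
     (minus ((fun r => r + 2 * exp (- (r * y)) / y - exp (- (r * y)) ^ 2 / (2 * y)) 1)
            ((fun r => r + 2 * exp (- (r * y)) / y - exp (- (r * y)) ^ 2 / (2 * y)) 0))).
  { apply (@is_RInt_derive R_CompleteNormedModule (fun r => r + 2 * exp (- (r * y)) / y - exp (- (r * y)) ^ 2 / (2 * y)) (fun r => (1 - exp (- (r * y))) ^ 2)).
    - intros r _. auto_derive. lra. field. lra.
    - intros r _. contR. }
  rewrite (is_RInt_unique _ _ _ _ HI). unfold minus, plus, opp; simpl.
  rewrite Rpower_m1 by auto. rewrite Rmult_1_l, Rmult_0_l, Ropp_0, exp_0.
  replace (- (2 * y)) with (- y + - y) by ring. rewrite exp_plus. field. lra.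
Qed.

Lemma ht2_main a x z : 0 < a < 1 -> 0 < x -> -1 < z < 0 ->
  let T := fun j => Rpower (yy a x j) (z - 1) * (exp (- yy a x j) - 1 + yy a x j) in
  zsummable T /\
  Rpower a (- z) * Gamma (z + 1) / ((1 - Rpower a (- z)) * (1 - z)) <= zsum T <=
  Gamma (z + 1) / ((1 - Rpower a (- z)) * (1 - z)).
Proof.
  intros [Ha0 Ha1] Hx [Hz1 Hz] T.
  assert (Hp : Rpower a (- z) < 1) by (apply Rpower_lt1; lra).
  assert (HT : forall j, Tt a x z (fun y => 1 - exp (- y)) j = T j).
  { intros j. unfold Tt, T. apply tilde2_term. apply yy_pos; auto. }
  destruct (Tt_main a x z (Rpower a (- z) * Gamma (z + 1) / (1 - Rpower a (- z))) (Gamma (z + 1) / (1 - Rpower a (- z)))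
     (fun y => 1 - exp (- y)) Ha0 Ha1 Hx Hz) as [Hs [H1 H2]].
  - intros y r. contR.
  - intros u v Huv. assert (exp (- v) <= exp (- u)) by (apply exp_le; lra). lra.
  - intros u Hu. assert (exp (- u) <= exp 0) by (apply exp_le; lra). rewrite exp_0 in H. lra.
  - intros x' Hx'. apply (h2_main a x' z); auto; lra.
  - rewrite (zsum_ext _ _ HT) in H1, H2. split. apply (zsummable_ext _ _ HT); auto.
    replace (Rpower a (- z) * Gamma (z + 1) / ((1 - Rpower a (- z)) * (1 - z))) with
      (Rpower a (- z) * Gamma (z + 1) / (1 - Rpower a (- z)) / (1 - z)) by (field; lra).
    replace (Gamma (z + 1) / ((1 - Rpower a (- z)) * (1 - z))) with
      (Gamma (z + 1) / (1 - Rpower a (- z)) / (1 - z)) by (field; lra).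
    split; auto.
Qed.

Lemma ht3_main a x z : 0 < a < 1 -> 0 < x -> -1 < z < 0 ->
  let T := fun j => Rpower (yy a x j) (z - 1) *
     (2 * exp (- yy a x j) - / 2 * exp (- (2 * yy a x j)) + yy a x j - 3 / 2) in
  zsummable T /\
  Rpower a (- z) * (2 - Rpower 2 (- z)) * Gamma (z + 1) / ((1 - Rpower a (- z)) * (1 - z)) <= zsum T <=
  (2 - Rpower 2 (- z)) * Gamma (z + 1) / ((1 - Rpower a (- z)) * (1 - z)).
Proof.
  intros [Ha0 Ha1] Hx [Hz1 Hz] T.
  assert (Hp : Rpower a (- z) < 1) by (apply Rpower_lt1; lra).
  assert (HT : forall j, Tt a x z (fun y => (1 - exp (- y)) ^ 2) j = T j).
  { intros j. unfold Tt, T. apply tilde3_term. apply yy_pos; auto. }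
  destruct (Tt_main a x z (Rpower a (- z) * (2 - Rpower 2 (- z)) * Gamma (z + 1) / (1 - Rpower a (- z)))
     ((2 - Rpower 2 (- z)) * Gamma (z + 1) / (1 - Rpower a (- z)))
     (fun y => (1 - exp (- y)) ^ 2) Ha0 Ha1 Hx Hz) as [Hs [H1 H2]].
  - intros y r. contR.
  - intros u v Huv. assert (exp (- v) <= exp (- u)) by (apply exp_le; lra).
    assert (exp (- u) <= exp 0) by (apply exp_le; lra). rewrite exp_0 in H0.
    assert (0 < exp (- v)) by apply exp_pos. simpl. nra.
  - intros u Hu. simpl. assert (exp (- u) <= exp 0) by (apply exp_le; lra). rewrite exp_0 in H. nra.
  - intros x' Hx'. apply (h3_main a x' z); auto; lra.
  - rewrite (zsum_ext _ _ HT) in H1, H2. split. apply (zsummable_ext _ _ HT); auto.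
    replace (Rpower a (- z) * (2 - Rpower 2 (- z)) * Gamma (z + 1) / ((1 - Rpower a (- z)) * (1 - z))) with
      (Rpower a (- z) * (2 - Rpower 2 (- z)) * Gamma (z + 1) / (1 - Rpower a (- z)) / (1 - z)) by (field; lra).
    replace ((2 - Rpower 2 (- z)) * Gamma (z + 1) / ((1 - Rpower a (- z)) * (1 - z))) with
      ((2 - Rpower 2 (- z)) * Gamma (z + 1) / (1 - Rpower a (- z)) / (1 - z)) by (field; lra).
    split; auto.
Qed.


Lemma params_ok (N : nat) (c sigma : R) :
  (2 <= N)%nat -> 0 < c -> c < INR N -> 0 < sigma ->
  0 < a_par N c < 1 /\ 0 < theta_par N c sigma.
Proof.
  intros HN Hc HcN Hs.
  assert (HN2 : 2 <= INR N) by (replace 2 with (INR 2) by (simpl; ring); apply le_INR; auto).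
  unfold a_par, theta_par. split; [split|].
  - apply Rdiv_lt_0_compat; lra.
  - apply Rlt_div_l; lra.
  - apply Rdiv_lt_0_compat; [|lra]. apply Rmult_lt_0_compat; auto.
    assert (INR N ^ 2 / c > 1); [|lra].
    apply Rlt_gt, Rlt_div_r; [lra|]. nra.
Qed.

Lemma u_yy a th t j : u a th t j = yy a (th * t) j.
Proof. unfold u, yy. ring. Qed.

Theorem proposition3p1p1 (N : nat) (c sigma : R)
  (HN : (2 <= N)%nat) (Hc0 : 0 < c) (HcN : c < INR N) (Hsigma : 0 < sigma) :
  let a := a_par N c in
  let theta := theta_par N c sigma in
  forall (zeta t : R), 0 < t ->
  let G := Gamma (zeta + 1) in
  (0 < zeta ->
     zsummable (h1_term a theta zeta t) /\
     G / (Rpower a (- zeta) - 1) <= zsum (h1_term a theta zeta t) <=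
       Rpower a (- zeta) * G / (Rpower a (- zeta) - 1)) /\
  (-1 < zeta < 0 ->
     (zsummable (h2_term a theta zeta t) /\
      Rpower a (- zeta) * G / (1 - Rpower a (- zeta)) <= zsum (h2_term a theta zeta t) <=
        G / (1 - Rpower a (- zeta))) /\
     (zsummable (h3_term a theta zeta t) /\
      Rpower a (- zeta) * (2 - Rpower 2 (- zeta)) * G / (1 - Rpower a (- zeta))
        <= zsum (h3_term a theta zeta t) <=
        (2 - Rpower 2 (- zeta)) * G / (1 - Rpower a (- zeta))) /\
     (zsummable (h2t_term a theta zeta t) /\
      Rpower a (- zeta) * G / ((1 - Rpower a (- zeta)) * (1 - zeta))
        <= zsum (h2t_term a theta zeta t) <=
        G / ((1 - Rpower a (- zeta)) * (1 - zeta))) /\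
     (zsummable (h3t_term a theta zeta t) /\
      Rpower a (- zeta) * (2 - Rpower 2 (- zeta)) * G / ((1 - Rpower a (- zeta)) * (1 - zeta))
        <= zsum (h3t_term a theta zeta t) <=
        (2 - Rpower 2 (- zeta)) * G / ((1 - Rpower a (- zeta)) * (1 - zeta)))).

Proof.
  intros a theta zeta t Ht G.
  destruct (params_ok N c sigma HN Hc0 HcN Hsigma) as [Ha Hth].
  assert (Hx : 0 < theta * t) by (apply Rmult_lt_0_compat; auto).
  split.
  - intros Hz. destruct (h1_main a (theta * t) zeta Ha Hx Hz) as [Hs HB].
    assert (E : forall j, (fun j => Rpower (yy a (theta * t) j) zeta * exp (- yy a (theta * t) j)) j = h1_term a theta zeta t j).
    { intros j. unfold h1_term. rewrite u_yy. reflexivity. }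
    rewrite (zsum_ext _ _ E) in HB. split; [apply (zsummable_ext _ _ E); auto| exact HB].
  - intros Hz. split; [|split; [|split]].
    + destruct (h2_main a (theta * t) zeta Ha Hx Hz) as [Hs HB].
      assert (E : forall j, (fun j => Rpower (yy a (theta * t) j) zeta * (1 - exp (- yy a (theta * t) j))) j = h2_term a theta zeta t j).
      { intros j. unfold h2_term. rewrite u_yy. reflexivity. }
      rewrite (zsum_ext _ _ E) in HB. split; [apply (zsummable_ext _ _ E); auto| exact HB].
    + destruct (h3_main a (theta * t) zeta Ha Hx Hz) as [Hs HB].
      assert (E : forall j, (fun j => Rpower (yy a (theta * t) j) zeta * (1 - exp (- yy a (theta * t) j)) ^ 2) j = h3_term a theta zeta t j).
      { intros j. unfold h3_term. rewrite u_yy. reflexivity. }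
      rewrite (zsum_ext _ _ E) in HB. split; [apply (zsummable_ext _ _ E); auto| exact HB].
    + destruct (ht2_main a (theta * t) zeta Ha Hx Hz) as [Hs HB].
      assert (E : forall j, (fun j => Rpower (yy a (theta * t) j) (zeta - 1) * (exp (- yy a (theta * t) j) - 1 + yy a (theta * t) j)) j = h2t_term a theta zeta t j).
      { intros j. unfold h2t_term. rewrite u_yy. reflexivity. }
      rewrite (zsum_ext _ _ E) in HB. split; [apply (zsummable_ext _ _ E); auto| exact HB].
    + destruct (ht3_main a (theta * t) zeta Ha Hx Hz) as [Hs HB].
      assert (E : forall j, (fun j => Rpower (yy a (theta * t) j) (zeta - 1) *
         (2 * exp (- yy a (theta * t) j) - / 2 * exp (- (2 * yy a (theta * t) j)) + yy a (theta * t) j - 3 / 2)) j = h3t_term a theta zeta t j).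
      { intros j. unfold h3t_term. rewrite u_yy. reflexivity. }
      rewrite (zsum_ext _ _ E) in HB. split; [apply (zsummable_ext _ _ E); auto| exact HB].
Qed.
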